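(* Let $\mathbb{R}^m$ be endowed with a norm $\|\cdot\|$. Let $\bar A\in\mathbb{R}^{(m+1)\times n}$ have at least two different columns and let $v\in\mathbb{R}^m$. Then for all $\bar u\in F(v)$ and all $x\in\Delta_{n-1}$, \[ \min\{\|x-z\|_1: z\in\Delta_{n-1},\ \bar Az=\bar u\}\le\frac{2\|\bar Ax-\bar u\|_v}{\Phi_v(\bar A)}. \]
   Context: $\Delta_{n-1}=\{x\in\mathbb{R}^n_+:\sum_ix_i=1\}$. A matrix is identified with the set of its columns; $\mathrm{conv}(\bar A)=\{\bar Ax:x\in\Delta_{n-1}\}$. For $\bar w=(w,w_{m+1})\in\mathbb{R}^{m+1}$, $\|\bar w\|_v=\sqrt{\|w\|^2+|\langle v,w\rangle+w_{m+1}|}$; for nonempty $F,G\subseteq\mathbb{R}^{m+1}$, $\mathrm{dist}_v(F,G)=\min_{\bar w\in F,\bar w'\in G}\|\bar w-\bar w'\|_v$. $F(v)=\operatorname{Argmin}_{\bar w\in\mathrm{conv}(\bar A)}\langle(v,1),\bar w\rangle$, a face of $\mathrm{conv}(\bar A)$. The local facial distance is $\Phi_v(\bar A)=\min\{\mathrm{dist}_v(G,\mathrm{conv}(\bar A\setminus G)):G\text{ a face of }F(v),\ \emptyset\ne G\ne\mathrm{conv}(\bar A)\}$, where $\bar A\setminus G$ denotes the columns of $\bar A$ not in $G$. *)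

(* Defs.v *)
From mathcomp Require Import all_boot all_order all_algebra.
From mathcomp Require Import classical_sets reals.
Set Implicit Arguments. Unset Strict Implicit. Unset Printing Implicit Defensive.
Import Order.TTheory GRing.Theory Num.Theory.
Local Open Scope ring_scope.
Local Open Scope classical_set_scope.

Section Defs.
Variable R : realType.

Definition is_norm (m : nat) (N : 'cV[R]_m -> R) : Prop :=
  [/\ forall x, N x = 0 -> x = 0,
      forall (a : R) x, N (a *: x) = `|a| * N x &
      forall x y, N (x + y) <= N x + N y].

Definition simplex (n : nat) : set 'cV[R]_n :=
  [set x | (forall i, 0 <= x i 0) /\ \sum_i x i 0 = 1].

Definition convA (p n : nat) (A : 'M[R]_(p, n)) : set 'cV[R]_p :=
  [set A *m x | x in @simplex n].

Definition conv_cols (p n : nat) (A : 'M[R]_(p, n)) (P : 'I_n -> Prop)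
  : set 'cV[R]_p :=
  [set A *m x | x in [set x | @simplex n x /\ forall j, ~ P j -> x j 0 = 0]].

(* <(v,1), wbar> = <v,w> + w_{m+1}, with wbar = col_mx w w_{m+1} *)
Definition lin (m : nat) (v : 'cV[R]_m) (w : 'cV[R]_(m + 1)) : R :=
  (v^T *m usubmx w) 0 0 + (dsubmx w) 0 0.

Definition normv (m : nat) (N : 'cV[R]_m -> R) (v : 'cV[R]_m)
  (w : 'cV[R]_(m + 1)) : R :=
  Num.sqrt (N (usubmx w) ^+ 2 + `|lin v w|).

(* dist_v(F,G) = min over F x G of ||w - w'||_v (stated as an infimum;
   for the nonempty compact sets used below it is attained) *)
Definition distv (m : nat) (N : 'cV[R]_m -> R) (v : 'cV[R]_m)
  (F G : set 'cV[R]_(m + 1)) : R :=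
  inf [set d | exists (w w' : 'cV[R]_(m + 1)),
          [/\ F w, G w' & d = normv N v (w - w')]].

Definition convex_set (p : nat) (C : set 'cV[R]_p) : Prop :=
  forall x y (l : R), C x -> C y -> 0 <= l <= 1 -> C (l *: x + (1 - l) *: y).

Definition is_face (p : nat) (C G : set 'cV[R]_p) : Prop :=
  [/\ G `<=` C, convex_set G &
      forall x y (l : R), C x -> C y -> 0 < l < 1 ->
        G (l *: x + (1 - l) *: y) -> G x /\ G y].

Definition Fv (m n : nat) (A : 'M[R]_(m + 1, n)) (v : 'cV[R]_m)
  : set 'cV[R]_(m + 1) :=
  [set w | convA A w /\ forall w', convA A w' -> lin v w <= lin v w'].

(* local facial distance Phi_v(Abar) (min over the finitely many faces,
   stated as an infimum) *)
Definition Phi (m n : nat) (N : 'cV[R]_m -> R) (A : 'M[R]_(m + 1, n))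
  (v : 'cV[R]_m) : R :=
  inf [set distv N v G (conv_cols A (fun j => ~ G (col j A))) |
        G in [set G | is_face (Fv A v) G /\ G <> set0 /\ G <> convA A]].

Definition l1norm (n : nat) (x : 'cV[R]_n) : R := \sum_i `|x i 0|.

End Defs.
Arguments simplex {R} n.

(* Main.v *)
Require Import Defs.
From mathcomp Require Import all_boot all_order all_algebra.
From mathcomp Require Import classical_sets reals.
From mathcomp Require Import boolp interval_inference topology normedtype derive matrix_normedtype.
From mathcomp Require Import ring lra.
Set Implicit Arguments. Unset Strict Implicit. Unset Printing Implicit Defensive.
Import Order.TTheory GRing.Theory Num.Theory.
Import numFieldTopology.Exports numFieldNormedType.Exports.
Local Open Scope ring_scope.
Local Open Scope classical_set_scope.

Section Basic.
Variables (R : realType) (m n : nat) (N : 'cV[R]_m -> R).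
Variables (A : 'M[R]_(m + 1, n)) (v : 'cV[R]_m).
Hypothesis HN : is_norm N.

Lemma N0 : N 0 = 0.
Proof. case: HN => _ HZ _. by rewrite -(scale0r (0 : 'cV[R]_m)) HZ normr0 mul0r. Qed.

Lemma NN x : N (- x) = N x.
Proof. case: HN => _ HZ _. by rewrite -scaleN1r HZ normrN normr1 mul1r. Qed.

Lemma Nge0 x : 0 <= N x.
Proof.
case: HN => _ _ HT. have := HT x (- x). rewrite subrr N0 NN. lra.
Qed.

Lemma NZ a x : N (a *: x) = `|a| * N x.
Proof. by case: HN. Qed.

Lemma Nsum (I : finType) (d : I -> R) (b : I -> 'cV[R]_m) :
  N (\sum_i d i *: b i) <= \sum_i `|d i| * N (b i).
Proof.
case: HN => _ HZ HT.
elim/big_ind2: _ => [|x1 x2 y1 y2 h1 h2|i _]; first by rewrite N0.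
  by apply: le_trans (HT _ _) _; apply: lerD.
by rewrite HZ.
Qed.

Lemma Ndiff x y : `|N x - N y| <= N (x - y).
Proof.
case: HN => _ _ HT. rewrite ler_norml; apply/andP; split.
  have := HT (y - x) x; rewrite subrK -(NN (y - x)) opprB. lra.
have := HT (x - y) y; rewrite subrK. lra.
Qed.

Lemma linE w : lin v w = \sum_k v k 0 * w (lshift 1 k) 0 + w (rshift m 0) 0.
Proof.
rewrite /lin !mxE; congr (_ + _); apply: eq_bigr => k _; by rewrite !mxE.
Qed.

Lemma linD w1 w2 : lin v (w1 + w2) = lin v w1 + lin v w2.
Proof.
rewrite !linE !mxE. under eq_bigr do rewrite mxE mulrDr. rewrite big_split /=. ring.
Qed.

Lemma linZ a w : lin v (a *: w) = a * lin v w.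
Proof.
rewrite !linE !mxE mulrDr mulr_sumr. congr (_ + _); apply: eq_bigr => k _; rewrite mxE. ring.
Qed.

Lemma linN w : lin v (- w) = - lin v w.
Proof. by rewrite -scaleN1r linZ mulN1r. Qed.

Lemma linB w1 w2 : lin v (w1 - w2) = lin v w1 - lin v w2.
Proof. by rewrite linD linN. Qed.

Lemma lin0 : lin v 0 = 0.
Proof. by rewrite -(scale0r (0 : 'cV_(m+1))) linZ mul0r. Qed.

Lemma lin_sum (I : finType) (d : I -> R) (b : I -> 'cV[R]_(m+1)) :
  lin v (\sum_i d i *: b i) = \sum_i d i * lin v (b i).
Proof.
elim/big_ind2: _ => [|x1 x2 y1 y2 h1 h2|i _]; first by rewrite lin0.
  by rewrite linD h1 h2.
by rewrite linZ.
Qed.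

Lemma mulA_col (z : 'cV[R]_n) : A *m z = \sum_j z j 0 *: col j A.
Proof.
apply/matrixP => i k; rewrite ord1 !mxE summxE; apply: eq_bigr => j _.
by rewrite !mxE mulrC.
Qed.

Definition c j := lin v (col j A).

Lemma lin_mul (z : 'cV[R]_n) : lin v (A *m z) = \sum_j z j 0 * c j.
Proof. by rewrite mulA_col lin_sum. Qed.

Lemma usub_mul (z : 'cV[R]_n) : usubmx (A *m z) = \sum_j z j 0 *: usubmx (col j A).
Proof.
rewrite mulA_col. elim/big_ind2: _ => [|x1 x2 y1 y2 h1 h2|i _].
- by apply/matrixP => i k; rewrite !mxE.
- by rewrite -h1 -h2; apply/matrixP => i k; rewrite !mxE.
- by apply/matrixP => i' k; rewrite !mxE.
Qed.

Lemma normv_ge0 w : 0 <= normv N v w.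
Proof. exact: sqrtr_ge0. Qed.

Lemma normvN w : normv N v (- w) = normv N v w.
Proof.
rewrite /normv linN normrN.
have -> : usubmx (- w) = - usubmx w by apply/matrixP => i k; rewrite !mxE.
by rewrite NN.
Qed.

Lemma normv_eq0 w : normv N v w = 0 -> w = 0.
Proof.
rewrite /normv => /eqP; rewrite sqrtr_eq0 => h.
have h1 : 0 <= N (usubmx w) ^+ 2 by rewrite sqr_ge0.
have h2 : 0 <= `|lin v w| by [].
have e1 : N (usubmx w) ^+ 2 = 0 by lra.
have e2 : `|lin v w| = 0 by lra.
have [HN0 _ _] := HN.
move: e1 => /eqP; rewrite sqrf_eq0 => /eqP /HN0 hu.
move: e2 => /eqP; rewrite normr_eq0 => /eqP; rewrite /lin hu mulmx0 mxE add0r => hd.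
rewrite -(vsubmxK w) hu; apply/matrixP => i k; rewrite !mxE.
case: splitP => [j _|j _]; first by rewrite mxE.
by rewrite !ord1 hd.
Qed.

Lemma normv_scale t w : 0 <= t <= 1 -> t * normv N v w <= normv N v (t *: w).
Proof.
move=> /andP[t0 t1].
rewrite /normv.
have -> : t * Num.sqrt (N (usubmx w) ^+ 2 + `|lin v w|) =
   Num.sqrt (t ^+ 2 * (N (usubmx w) ^+ 2 + `|lin v w|)).
  by rewrite sqrtrM ?exprn_ge0 // sqrtr_sqr (ger0_norm t0).
rewrite ler_sqrt; last by rewrite addr_ge0 ?sqr_ge0.
rewrite linZ normrM (ger0_norm t0).
have -> : usubmx (t *: w) = t *: usubmx w by apply/matrixP => i k; rewrite !mxE.
rewrite NZ (ger0_norm t0).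
have hb := normr_ge0 (lin v w).
have h2 : 0 <= (t - t ^+ 2) * `|lin v w| by apply: mulr_ge0 => //; nra.
nra.
Qed.

End Basic.

Section Simplex.
Variables (R : realType) (n : nat).

Definition ee (j : 'I_n) : 'cV[R]_n := delta_mx j 0.

Lemma ee_entry j k : ee j k 0 = (k == j)%:R.
Proof. by rewrite /ee mxE eqxx andbT. Qed.

Lemma sum_ee j : \sum_k ee j k 0 = 1.
Proof.
rewrite (bigD1 j) //= ee_entry eqxx big1 ?addr0 // => k /negbTE hk.
by rewrite ee_entry hk.
Qed.

Lemma simplex_ee j : simplex n (ee j).
Proof.
split; last exact: sum_ee.
by move=> k; rewrite ee_entry ler0n.
Qed.

Definition supp (z : 'cV[R]_n) : {set 'I_n} := finset (fun j => z j 0 != 0).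
Lemma in_supp z j : (j \in supp z) = (z j 0 != 0).
Proof. by rewrite inE. Qed.

Lemma simplex_le1 (z : 'cV[R]_n) k : simplex n z -> z k 0 <= 1.
Proof.
move=> [h0 h1]; rewrite -h1 (bigD1 k) //= lerDl.
by apply: sumr_ge0 => i _.
Qed.

Lemma simplex_ex (z : 'cV[R]_n) : simplex n z -> exists j, z j 0 != 0.
Proof.
move=> [_ h1]; case: (boolP [exists j, z j 0 != 0]) => [/existsP //|/existsPn hn].
have : \sum_k z k 0 = 0 by apply: big1 => k _; apply/eqP/negbNE/hn.
by rewrite h1 => /eqP; rewrite oner_eq0.
Qed.

Lemma simplex_one (z : 'cV[R]_n) j : simplex n z -> z j 0 = 1 -> z = ee j.
Proof.
move=> [h0 h1] hj; apply/matrixP => k i; rewrite ord1 ee_entry.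
case: eqP => [->|/eqP hk] //.
have : \sum_(k0 | k0 != j) z k0 0 = 0.
  by move: h1; rewrite (bigD1 j) //= hj; lra.
by move/psumr_eq0P => h; apply: h => // i0 _; apply: h0.
Qed.

Lemma decomp (z : 'cV[R]_n) j : simplex n z -> z j 0 < 1 ->
  exists z', [/\ simplex n z', z = z j 0 *: ee j + (1 - z j 0) *: z' &
     forall k, z' k 0 != 0 -> z k 0 != 0 /\ k != j].
Proof.
move=> [h0 h1] hj.
have hpos : 0 < 1 - z j 0 by lra.
have hne : 1 - z j 0 != 0 by rewrite gt_eqF.
exists ((1 - z j 0)^-1 *: (z - z j 0 *: ee j)); split.
- split.
  + move=> k; rewrite !mxE eqxx andbT; case: eqP => [->|_].
      by rewrite mulr1 subrr mulr0.
    by rewrite mulr0 subr0 mulr_ge0 // invr_ge0 ltW.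
  + rewrite (eq_bigr (fun k => (1 - z j 0)^-1 * (z k 0 - z j 0 * ee j k 0))); last first.
      by move=> k _; rewrite !mxE.
    rewrite -mulr_sumr sumrB -mulr_sumr sum_ee h1 mulr1 mulVf //.
- rewrite scalerA divff // scale1r addrC subrK //.
- move=> k; rewrite !mxE eqxx andbT; case: (eqVneq k j) => [->|hk].
    by rewrite mulr1 subrr mulr0 eqxx.
  by rewrite mulr0 subr0 mulf_eq0 negb_or => /andP[_ ->].
Qed.

End Simplex.
Arguments supp {R n}.

Section Fv.
Variables (R : realType) (m n : nat) (N : 'cV[R]_m -> R).
Variables (A : 'M[R]_(m + 1, n)) (v : 'cV[R]_m).
Variable u : 'cV[R]_(m + 1).
Hypothesis Fu : Fv A v u.

Local Notation c := (c A v).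
Definition L := lin v u.
Definition Isupp (z : 'cV[R]_n) := forall j, z j 0 != 0 -> c j = L.

Lemma Aee j : A *m ee R j = col j A.
Proof. by rewrite colE. Qed.

Lemma convA_ee j : convA A (col j A).
Proof. by exists (ee R j); [exact: simplex_ee | exact: Aee]. Qed.

Lemma c_ge j : L <= c j.
Proof. by have [_ h] := Fu; apply: h; apply: convA_ee. Qed.

Lemma lin_ge z : simplex n z -> L <= lin v (A *m z).
Proof.
move=> [h0 h1]; rewrite lin_mul -[L]mul1r -h1 mulr_suml.
by apply: ler_sum => j _; apply: ler_wpM2l => //; apply: c_ge.
Qed.

Lemma convA_ge w : convA A w -> L <= lin v w.
Proof. by move=> [z hz <-]; apply: lin_ge. Qed.

Lemma Fv_lin w : Fv A v w -> lin v w = L.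
Proof.
move=> [hw hmin]; apply/eqP; rewrite eq_le convA_ge // andbT.
by apply: hmin; case: Fu.
Qed.

Lemma Fv_supp z : simplex n z -> Fv A v (A *m z) -> Isupp z.
Proof.
move=> hz hF; have := Fv_lin hF; rewrite lin_mul => hs.
have hz' := hz; case: hz' => [h0 h1].
have : \sum_j z j 0 * (c j - L) = 0.
  under eq_bigr do rewrite mulrBr.
  by rewrite sumrB hs -mulr_suml h1 mul1r subrr.
move/psumr_eq0P => h j hj.
have : z j 0 * (c j - L) = 0.
  by apply: h => // i _; apply: mulr_ge0 => //; rewrite subr_ge0 c_ge.
move/eqP; rewrite mulf_eq0 (negbTE hj) /= subr_eq0 => /eqP //.
Qed.

Lemma Fv_of z : simplex n z -> Isupp z -> Fv A v (A *m z).
Proof.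
move=> hz hs; split; first by exists z.
move=> w' hw'; apply: (le_trans _ (convA_ge hw')).
have [h0 h1] := hz.
rewrite le_eqVlt; apply/orP; left; apply/eqP.
rewrite lin_mul -[L]mul1r -h1 mulr_suml.
apply: eq_bigr => j _.
by have [->|/hs ->] := eqVneq (z j 0) 0; rewrite ?mul0r.
Qed.

Lemma Fv_rep w : Fv A v w -> exists z, [/\ simplex n z, A *m z = w & Isupp z].
Proof.
move=> hF; have [[z hz hzw] _] := hF.
by exists z; split => //; apply: Fv_supp => //; rewrite hzw.
Qed.

Lemma Fv_comb3 a b d w1 w2 w3 : 0 <= a -> 0 <= b -> 0 <= d -> a + b + d = 1 ->
  Fv A v w1 -> Fv A v w2 -> Fv A v w3 -> Fv A v (a *: w1 + b *: w2 + d *: w3).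
Proof.
move=> ha hb hd habd /Fv_rep[z1 [[p1 s1] e1 i1]] /Fv_rep[z2 [[p2 s2] e2 i2]]
  /Fv_rep[z3 [[p3 s3] e3 i3]].
have -> : a *: w1 + b *: w2 + d *: w3 = A *m (a *: z1 + b *: z2 + d *: z3).
  by rewrite !mulmxDr -!scalemxAr e1 e2 e3.
apply: Fv_of.
- split.
  + by move=> k; rewrite !mxE !addr_ge0 // mulr_ge0.
  + under eq_bigr do rewrite !mxE.
    by rewrite !big_split /= -!mulr_sumr s1 s2 s3 !mulr1.
- move=> j; rewrite !mxE => hj.
  have [h1|h1] := eqVneq (z1 j 0) 0; last exact: i1.
  have [h2|h2] := eqVneq (z2 j 0) 0; last exact: i2.
  have [h3|h3] := eqVneq (z3 j 0) 0; last exact: i3.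
  by move: hj; rewrite h1 h2 h3 !mulr0 !addr0 eqxx.
Qed.

Lemma Fv_comb2 a w1 w2 : 0 <= a <= 1 ->
  Fv A v w1 -> Fv A v w2 -> Fv A v (a *: w1 + (1 - a) *: w2).
Proof.
move=> /andP[h0 h1] F1 F2.
have -> : a *: w1 + (1 - a) *: w2 = a *: w1 + (1 - a) *: w2 + 0 *: w1.
  by rewrite scale0r addr0.
apply: Fv_comb3 => //; lra.
Qed.

Lemma Fv_convA w : Fv A v w -> convA A w.
Proof. by case. Qed.

Lemma Fv_col (z : 'cV[R]_n) j : Isupp z -> z j 0 != 0 -> Fv A v (col j A).
Proof.
move=> hs hj; rewrite -Aee; apply: Fv_of; first exact: simplex_ee.
move=> k; rewrite ee_entry; case: (eqVneq k j) => [->|hk]; first by move=> _; apply: hs.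
by rewrite eqxx.
Qed.

Lemma extract (G : set 'cV[R]_(m + 1)) (z : 'cV[R]_n) j :
  is_face (Fv A v) G -> simplex n z -> Isupp z -> G (A *m z) -> z j 0 != 0 ->
  G (col j A).
Proof.
move=> [GF Gc Gx] hz hs hG hj.
have hle := simplex_le1 j hz.
have [hlt|heq] := ltrP (z j 0) 1; last first.
  have h1 : z j 0 = 1 by apply/eqP; rewrite eq_le hle heq.
  by move: hG; rewrite (simplex_one hz h1) Aee.
have [z' [hz' ez hz's]] := decomp hz hlt.
have hs' : Isupp z'.
  by move=> k /hz's [hk _]; apply: hs.
have Fz' : Fv A v (A *m z') by apply: Fv_of.
have Fj : Fv A v (col j A) by apply: (Fv_col hs hj).
have hpos : 0 < z j 0 by rewrite lt_neqAle eq_sym hj; case: hz => h0 _; rewrite h0.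
have := Gx (col j A) (A *m z') (z j 0) Fj Fz'.
rewrite hpos hlt => /(_ isT).
rewrite -Aee !scalemxAr -mulmxDr -ez => /(_ hG) [].
by rewrite Aee.
Qed.

Lemma conv_closed (C : set 'cV[R]_(m + 1)) (z : 'cV[R]_n) :
  convex_set C -> simplex n z -> (forall j, z j 0 != 0 -> C (col j A)) ->
  C (A *m z).
Proof.
move=> hC; move: z.
suff H : forall k (z : 'cV[R]_n), leq #|supp z| k ->
    simplex n z -> (forall j, z j 0 != 0 -> C (col j A)) -> C (A *m z).
  by move=> z hz hcol; apply: (H _ z (leqnn _)).
elim=> [|k IH] z hk hz hcol.
  have [j hj] := simplex_ex hz.
  move: hk; rewrite leqn0 => /eqP/cards0_eq/setP/(_ j).
  by rewrite in_supp inE hj.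
have [j hj] := simplex_ex hz.
have hle := simplex_le1 j hz.
have [hlt|heq] := ltrP (z j 0) 1; last first.
  have h1 : z j 0 = 1 by apply/eqP; rewrite eq_le hle heq.
  by rewrite (simplex_one hz h1) Aee; apply: hcol.
have [z' [hz' ez hz's]] := decomp hz hlt.
have hsub : supp z' \subset (supp z :\ j)%SET.
  by apply/fintype.subsetP => k1; rewrite !inE => /hz's [-> ->].
have hk' : leq #|supp z'| k.
  have := subset_leq_card hsub.
  have := cardsD1 j (supp z); rewrite !inE hj /= => e.
  move=> h; apply: (leq_trans h); move: hk; rewrite e add1n ltnS //.
have hC' : C (A *m z').
  apply: (IH z' hk' hz') => k1 hk1.
  by apply: hcol; case: (hz's _ hk1).
have hpos : 0 <= z j 0 by case: hz => h0 _; apply: h0.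
rewrite ez mulmxDr -!scalemxAr Aee; apply: hC => //; first by apply: hcol.
by rewrite hpos ltW.
Qed.


End Fv.

Section Topo.
Variable R : realType.

Definition box k (y : 'rV[R]_k) := forall i, 0 <= y ord0 i <= 1.

Lemma ct_coord k i : continuous (fun y : 'rV[R]_k => y ord0 i).
Proof. exact: coord_continuous. Qed.

Lemma ct_cst (T : topologicalType) (a : R) : continuous (fun _ : T => a).
Proof. exact: cst_continuous. Qed.

Lemma ct_add (T : topologicalType) (f g : T -> R) :
  continuous f -> continuous g -> continuous (fun y => f y + g y).
Proof. by move=> hf hg x; exact: (continuousD (hf x) (hg x)). Qed.

Lemma ct_mul (T : topologicalType) (f g : T -> R) :
  continuous f -> continuous g -> continuous (fun y => f y * g y).
Proof. by move=> hf hg x; exact: (continuousM (hf x) (hg x)). Qed.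

Lemma ct_opp (T : topologicalType) (f : T -> R) :
  continuous f -> continuous (fun y => - f y).
Proof. by move=> hf x; exact: (continuousN (hf x)). Qed.

Lemma ct_sub (T : topologicalType) (f g : T -> R) :
  continuous f -> continuous g -> continuous (fun y => f y - g y).
Proof. by move=> hf hg; apply: ct_add => //; apply: ct_opp. Qed.

Lemma ct_abs (T : topologicalType) (f : T -> R) :
  continuous f -> continuous (fun y => `|f y|).
Proof.
move=> hf x; apply: (@continuous_comp _ _ _ f (@Num.Def.normr R R)); first exact: hf.
exact: norm_continuous.
Qed.

Lemma ct_sum (T : topologicalType) (I : Type) (r : seq I) (P : pred I)
  (F : I -> T -> R) :
  (forall i, continuous (F i)) -> continuous (fun y => \sum_(i <- r | P i) F i y).
Proof.
move=> hF; elim: r => [|a r IH].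
  by under eq_fun do rewrite big_nil; apply: ct_cst.
under eq_fun do rewrite big_cons.
destruct (P a); [exact: ct_add | exact: IH].
Qed.

Lemma squeeze_ct (T : topologicalType) (F h : T -> R) x :
  {for x, continuous h} -> h x = 0 -> (forall t, `|F x - F t| <= h t) ->
  {for x, continuous F}.
Proof.
move=> hc h0 hb; apply/cvgrPdist_lt => e e0.
have H := (cvgrPdist_lt _ _).1 hc e e0.
near=> t.
have ht : `|h x - h t| < e by near: t; exact: H.
rewrite h0 sub0r normrN in ht.
by apply: le_lt_trans (hb t) _; apply: le_lt_trans (ler_norm _) ht.
Unshelve. all: by end_near.
Qed.

Lemma evt k (g f : 'rV[R]_k -> R) : continuous g -> continuous f ->
  (exists y, box y /\ g y = 0) ->
  exists y, [/\ box y, g y = 0 & forall y', box y' -> g y' = 0 -> f y <= f y'].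
Proof.
move=> hg hf [y0 [hb0 hg0]].
pose B := [set y : 'rV[R]_k | forall i, `[(0:R), 1]%classic (y ord0 i)].
have boxB y : box y <-> B y.
  by split => h i; have := h i; rewrite /= in_itv.
have cB : compact B := @rV_compact R k (fun=> `[(0:R), 1]%classic) (fun _ => @segment_compact R 0 1).
have cl : closed [set y : 'rV[R]_k | g y = 0].
  exact: ((continuous_closedP g).1 hg _ (@closed_eq _ 0)).
have cA := compact_closedI cB cl.
have [c hc hmin] := compact_EVT_min (f := f) (A := B `&` [set y | g y = 0])
  (ex_intro _ y0 (conj ((boxB y0).1 hb0) hg0)) cA (continuous_subspaceT hf).
move: hc; rewrite inE => -[hcB hcg].
exists c; split; first by move=> i; have := hcB i; rewrite /= in_itv.
  by [].
move=> y' hy' hg'; apply: hmin; rewrite inE; split => //.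
Qed.

End Topo.

Section TopoN.
Variables (R : realType) (m : nat) (N : 'cV[R]_m -> R).
Hypothesis HN : is_norm N.

Lemma ct_N (T : topologicalType) (I : finType) (d : I -> T -> R) (b : I -> 'cV[R]_m) :
  (forall i, continuous (d i)) -> continuous (fun y => N (\sum_i d i y *: b i)).
Proof.
move=> hd x.
apply: (@squeeze_ct _ _ _ (fun y => \sum_i `|d i x - d i y| * N (b i))).
- apply: ct_sum => i; apply: ct_mul; last exact: ct_cst.
  by apply: ct_abs; apply: ct_sub; [apply: ct_cst | apply: hd].
- by apply: big1 => i _; rewrite subrr normr0 mul0r.
- move=> t; apply: le_trans (Ndiff HN _ _) _.
  rewrite -sumrB.
  under eq_bigr do rewrite -scalerBl.
  exact: Nsum.
Qed.

End TopoN.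

Lemma finmin (R : realType) (T : finType) (Q : T -> R -> Prop) :
  (forall S, exists2 d, 0 < d & Q S d) ->
  (forall S d d', Q S d -> 0 < d' <= d -> Q S d') ->
  exists2 d, 0 < d & forall S, Q S d.
Proof.
move=> hQ hmon.
suff [d d0 hd] : exists2 d, 0 < d & forall S, S \in enum T -> Q S d.
  by exists d => // S; apply: hd; rewrite mem_enum.
elim: (enum T) => [|a s [d d0 hd]]; first by exists 1 => //.
have [da da0 hda] := hQ a.
exists (Num.min d da); first by rewrite lt_min d0 da0.
move=> S; rewrite inE => /orP[/eqP ->|hS].
  by apply: hmon hda _; rewrite lt_min d0 da0 /= ge_min lexx orbT.
by apply: (hmon _ _ _ (hd S hS)); rewrite lt_min d0 da0 /= ge_min lexx.
Qed.

Section Pos.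
Variables (R : realType) (m n : nat) (N : 'cV[R]_m -> R).
Variables (A : 'M[R]_(m + 1, n)) (v : 'cV[R]_m).
Hypothesis HN : is_norm N.

Definition simplexB (P : pred 'I_n) (z : 'cV[R]_n) :=
  simplex n z /\ forall j, ~~ P j -> z j 0 = 0.

Definition Disj (S : {set 'I_n}) := forall b g,
  simplexB (mem S) b -> simplexB (fun j => j \notin S) g -> A *m b <> A *m g.

Definition QS (S : {set 'I_n}) (d : R) := Disj S -> forall b g,
  simplexB (mem S) b -> simplexB (fun j => j \notin S) g ->
  d <= normv N v (A *m b - A *m g).

Definition bt (y : 'rV[R]_(n + n)) : 'cV[R]_n := (lsubmx y)^T.
Definition gm (y : 'rV[R]_(n + n)) : 'cV[R]_n := (rsubmx y)^T.

Lemma bt_entry y j : bt y j 0 = y ord0 (lshift n j).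
Proof. by rewrite /bt !mxE. Qed.
Lemma gm_entry y j : gm y j 0 = y ord0 (rshift n j).
Proof. by rewrite /gm !mxE. Qed.

Definition mk (b g : 'cV[R]_n) : 'rV[R]_(n + n) := row_mx b^T g^T.
Lemma bt_mk b g : bt (mk b g) = b.
Proof. by rewrite /bt /mk row_mxKl trmxK. Qed.
Lemma gm_mk b g : gm (mk b g) = g.
Proof. by rewrite /gm /mk row_mxKr trmxK. Qed.

Lemma normv_sq w : normv N v w ^+ 2 = N (usubmx w) * N (usubmx w) + `|lin v w|.
Proof.
rewrite /normv sqr_sqrtr -?expr2 //.
by rewrite addr_ge0 // exprn_ge0 // Nge0.
Qed.

Lemma QS_pos S : exists2 d, 0 < d & QS S d.
Proof.
case: (pselect (Disj S)) => hD; last by exists 1 => // /hD.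
case: (pselect (exists b g, simplexB (mem S) b /\ simplexB (fun j => j \notin S) g))
  => [[b0 [g0 [hb0 hg0]]]|hne]; last first.
  by exists 1 => // _ b g hb hg; exfalso; apply: hne; exists b, g.
pose gf (y : 'rV[R]_(n + n)) := `|\sum_j y ord0 (lshift n j) - 1| +
  `|\sum_j y ord0 (rshift n j) - 1| +
  \sum_j (if j \in S then y ord0 (rshift n j) else y ord0 (lshift n j)).
pose dd (j : 'I_n) (y : 'rV[R]_(n + n)) := y ord0 (lshift n j) - y ord0 (rshift n j).
pose ff (y : 'rV[R]_(n + n)) :=
  N (\sum_j dd j y *: usubmx (col j A)) * N (\sum_j dd j y *: usubmx (col j A)) +
  `|\sum_j dd j y * c A v j|.
have ffE y : ff y = normv N v (A *m bt y - A *m gm y) ^+ 2.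
  rewrite normv_sq -mulmxBr usub_mul lin_mul /ff.
  have e : forall j, (bt y - gm y) j 0 = dd j y.
    by move=> j; rewrite !mxE /dd.
  have s1 : \sum_j (bt y - gm y) j 0 *: usubmx (col j A) =
      \sum_j dd j y *: usubmx (col j A) by apply: eq_bigr => j _; rewrite e.
  have s2 : \sum_j (bt y - gm y) j 0 * c A v j = \sum_j dd j y * c A v j.
    by apply: eq_bigr => j _; rewrite e.
  by rewrite s1 s2.
have hdd j : continuous (dd j) by apply: ct_sub; apply: ct_coord.
have cg : continuous gf.
  apply: ct_add; first apply: ct_add.
  - apply: ct_abs; apply: ct_sub; [|exact: ct_cst].
    by apply: ct_sum => j; apply: ct_coord.
  - apply: ct_abs; apply: ct_sub; [|exact: ct_cst].
    by apply: ct_sum => j; apply: ct_coord.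
  - by apply: ct_sum => j; case: (j \in S); apply: ct_coord.
have cf : continuous ff.
  apply: ct_add; first by apply: ct_mul; apply: (ct_N HN).
  by apply: ct_abs; apply: ct_sum => j; apply: ct_mul => //; apply: ct_cst.
have feas1 b g : simplexB (mem S) b -> simplexB (fun j => j \notin S) g ->
    box (mk b g) /\ gf (mk b g) = 0.
  move=> [[hbp hb1] hbS] [[hgp hg1] hgS].
  have eb j : mk b g ord0 (lshift n j) = b j 0.
    by rewrite -bt_entry bt_mk.
  have eg j : mk b g ord0 (rshift n j) = g j 0.
    by rewrite -gm_entry gm_mk.
  split.
    move=> i; rewrite -(splitK i); case: (split i) => j /=.
      rewrite eb hbp /=; exact: simplex_le1.
    rewrite eg hgp /=; exact: simplex_le1.
  rewrite /gf.
  under eq_bigr do rewrite eb.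
  under [X in _ + `|X - 1| + _]eq_bigr do rewrite eg.
  rewrite hb1 hg1 subrr normr0 addr0 add0r.
  apply: big1 => j _; case: ifP => hj.
    by rewrite eg; apply: hgS; rewrite negbK.
  by rewrite eb; apply: hbS; apply/negbT.
have feas2 y : box y -> gf y = 0 ->
    simplexB (mem S) (bt y) /\ simplexB (fun j => j \notin S) (gm y).
  move=> hy hg.
  have hy0 i : 0 <= y ord0 i by case/andP: (hy i).
  have h1 : 0 <= `|\sum_j y ord0 (lshift n j) - 1| by [].
  have h2 : 0 <= `|\sum_j y ord0 (rshift n j) - 1| by [].
  have h3 : 0 <= \sum_j (if j \in S then y ord0 (rshift n j) else y ord0 (lshift n j)).
    by apply: sumr_ge0 => j _; case: ifP.
  move: hg; rewrite /gf => hg.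
  have e1 : `|\sum_j y ord0 (lshift n j) - 1| = 0 by lra.
  have e2 : `|\sum_j y ord0 (rshift n j) - 1| = 0 by lra.
  have e3 : \sum_j (if j \in S then y ord0 (rshift n j) else y ord0 (lshift n j)) = 0 by lra.
  move: e1 e2 => /normr0P; rewrite subr_eq0 => /eqP e1 /normr0P.
  rewrite subr_eq0 => /eqP e2.
  have hnn : forall j : 'I_n, true ->
      0 <= (if j \in S then y ord0 (rshift n j) else y ord0 (lshift n j)).
    by move=> j _; case: ifP.
  have e3' := psumr_eq0P hnn e3.
  split; split.
  - split; first by move=> j; rewrite bt_entry.
    by under eq_bigr do rewrite bt_entry.
  - move=> j hj; rewrite bt_entry.
    have hj' : (j \in S) = false by apply/negbTE.
    by have := e3' j isT; rewrite hj'.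
  - split; first by move=> j; rewrite gm_entry.
    by under eq_bigr do rewrite gm_entry.
  - move=> j; rewrite negbK => hj; rewrite gm_entry.
    by have := e3' j isT; rewrite hj.
have [y [hy hgy hmin]] := evt cg cf (ex_intro _ (mk b0 g0) (feas1 _ _ hb0 hg0)).
have [hby hgy'] := feas2 _ hy hgy.
exists (normv N v (A *m bt y - A *m gm y)).
  rewrite lt_neqAle normv_ge0 andbT eq_sym; apply/eqP => /(normv_eq0 HN) /eqP.
  by rewrite subr_eq0 => /eqP; apply: hD.
move=> _ b g hb hg.
have [hb' hg'] := feas1 _ _ hb hg.
have := hmin _ hb' hg'; rewrite !ffE bt_mk gm_mk.
by rewrite ler_pXn2r // ?nnegrE ?normv_ge0.
Qed.

End Pos.

Section Dist.
Variables (R : realType) (m : nat) (N : 'cV[R]_m -> R) (v : 'cV[R]_m).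
Hypothesis HN : is_norm N.

Lemma distv_ge0 (F G : set 'cV[R]_(m + 1)) : 0 <= distv N v F G.
Proof.
rewrite /distv.
set D := [set d | _].
case: (pselect (D !=set0)) => [hne|/nonemptyPn ->]; last by rewrite inf0.
apply: lb_le_inf => // d [w [w' [_ _ ->]]]; exact: normv_ge0.
Qed.

Lemma distv_le (F G : set 'cV[R]_(m + 1)) w w' : F w -> G w' ->
  distv N v F G <= normv N v (w - w').
Proof.
move=> hw hw'; rewrite /distv; apply: ge_inf.
  by exists 0 => d [w1 [w2 [_ _ ->]]]; exact: normv_ge0.
by exists w, w'.
Qed.
End Dist.

Section Face.
Variables (R : realType) (m n : nat) (N : 'cV[R]_m -> R).
Variables (A : 'M[R]_(m + 1, n)) (v : 'cV[R]_m).
Hypothesis HN : is_norm N.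
Variable u : 'cV[R]_(m + 1).
Hypothesis Fu : Fv A v u.

Definition faceset := [set G | is_face (Fv A v) G /\ G <> set0 /\ G <> convA A].

Lemma face_bound : exists2 d, 0 < d & forall G, faceset G ->
  d <= distv N v G (conv_cols A (fun j => ~ G (col j A))).
Proof.
have [d d0 hd] := @finmin R _ (QS N A v) (@QS_pos R m n N A v HN)
  (fun S d d' h hd' hD b g hb hg => le_trans (proj2 (andP hd')) (h hD b g hb hg)).
exists d => // G [hf [hne hnA]].
have [GF Gc Gx] := hf.
pose S := finset (fun j => `[< G (col j A) >]).
have inS j : (j \in S) <-> G (col j A).
  by rewrite inE; split => /asboolP.
have [w Gw] : G !=set0.
  by case: (pselect (G !=set0)) => // /nonemptyPn.
have [j0 hj0] : exists j, ~ G (col j A).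
  case: (pselect (forall j, G (col j A))) => [hall|hnall]; last first.
    exact/existsNP.
  exfalso; apply: hnA; apply/seteqP; split => w1 hw1.
    exact: Fv_convA (GF _ hw1).
  case: hw1 => z hz <-; apply: (conv_closed Gc hz) => j _; exact: hall.
have hD : Disj A S.
  move=> b g [hb hbS] [hg hgS] hbg.
  have Gb : G (A *m b).
    apply: (conv_closed Gc hb) => j hj; apply/inS.
    by apply/negPn/negP => /hbS hb0; move: hj; rewrite hb0 eqxx.
  rewrite hbg in Gb.
  have Isg := Fv_supp Fu hg (GF _ Gb).
  have [j hj] := simplex_ex hg.
  have /inS hjS := extract Fu hf hg Isg Gb hj.
  by move: hj; rewrite hgS ?eqxx // negbK.
rewrite /distv; apply: lb_le_inf.
  exists (normv N v (w - A *m ee R j0)); exists w, (A *m ee R j0); split => //.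
  exists (ee R j0) => //; split; first exact: simplex_ee.
  move=> j hj; rewrite ee_entry; case: (eqVneq j j0) => [ej|] //.
  by exfalso; apply: hj; rewrite ej.
move=> _ [w1 [w2 [Gw1 [z [hz hzG] <-] ->]]].
have [b [hb hbw Isb]] := Fv_rep Fu (GF _ Gw1).
rewrite -hbw; apply: (hd S hD).
  split => // j hj; apply/eqP/negPn/negP => hbj.
  have Gj : G (col j A) by apply: (extract Fu hf hb Isb _ hbj); rewrite hbw.
  by case/negP: hj; apply/inS.
split => // j; rewrite negbK => /inS hj; apply: hzG.
by move=> h; apply: h.
Qed.

Lemma Phi_pos : (exists G, faceset G) -> 0 < Phi N A v.
Proof.
move=> [G0 hG0].
have [d d0 hd] := face_bound.
apply: (lt_le_trans d0); rewrite /Phi; apply: lb_le_inf.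
  by exists (distv N v G0 (conv_cols A (fun j => ~ G0 (col j A)))); exists G0.
by move=> _ [G hG <-]; apply: hd.
Qed.

Lemma Phi_le G w w' : faceset G -> G w -> conv_cols A (fun j => ~ G (col j A)) w' ->
  Phi N A v <= normv N v (w - w').
Proof.
move=> hG hw hw'; apply: le_trans (distv_le N v hw hw').
rewrite /Phi; apply: ge_inf; last by exists G.
by exists 0 => _ [G1 _ <-]; apply: distv_ge0.
Qed.

End Face.

Section Min.
Variables (R : realType) (m n : nat).
Variables (A : 'M[R]_(m + 1, n)) (u : 'cV[R]_(m + 1)) (x : 'cV[R]_n).

Lemma l1E (w : 'cV[R]_n) : l1norm w = \sum_j `|w j 0|.
Proof. by []. Qed.

Lemma exists_min : (exists z, simplex n z /\ A *m z = u) ->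
  exists z, [/\ simplex n z, A *m z = u &
    forall z', simplex n z' -> A *m z' = u -> l1norm (x - z) <= l1norm (x - z')].
Proof.
move=> [z0 [hz0 hAz0]].
pose gf (y : 'rV[R]_n) := `|\sum_j y ord0 j - 1| +
  \sum_i `|\sum_j A i j * y ord0 j - u i 0|.
pose ff (y : 'rV[R]_n) := \sum_j `|x j 0 - y ord0 j|.
have cg : continuous gf.
  apply: ct_add.
    apply: ct_abs; apply: ct_sub; last exact: ct_cst.
    by apply: ct_sum => j; apply: ct_coord.
  apply: ct_sum => i; apply: ct_abs; apply: ct_sub; last exact: ct_cst.
  by apply: ct_sum => j; apply: ct_mul; [exact: ct_cst | exact: ct_coord].
have cf : continuous ff.
  by apply: ct_sum => j; apply: ct_abs; apply: ct_sub; [exact: ct_cst| exact: ct_coord].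
have Ae (z : 'cV[R]_n) i : (A *m z) i 0 = \sum_j A i j * z^T ord0 j.
  by rewrite !mxE; apply: eq_bigr => j _; rewrite !mxE.
have feas1 z : simplex n z -> A *m z = u -> box z^T /\ gf z^T = 0.
  move=> [h0 h1] hAz; split.
    by move=> i; rewrite mxE h0 /=; apply: simplex_le1.
  rewrite /gf.
  under eq_bigr do rewrite mxE.
  rewrite h1 subrr normr0 add0r; apply: big1 => i _.
  by rewrite -Ae hAz subrr normr0.
have feas2 y : box y -> gf y = 0 -> simplex n y^T /\ A *m y^T = u.
  move=> hy hg.
  have h1 : 0 <= `|\sum_j y ord0 j - 1| by [].
  have h2 : 0 <= \sum_i `|\sum_j A i j * y ord0 j - u i 0|.
    by apply: sumr_ge0.
  have e1 : `|\sum_j y ord0 j - 1| = 0 by rewrite /gf in hg; lra.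
  have e2 : \sum_i `|\sum_j A i j * y ord0 j - u i 0| = 0 by rewrite /gf in hg; lra.
  split.
    split; first by move=> j; rewrite mxE; case/andP: (hy j).
    under eq_bigr do rewrite mxE.
    by move: e1 => /normr0P; rewrite subr_eq0 => /eqP.
  apply/matrixP => i k; rewrite ord1 Ae.
  have hh := psumr_eq0P (fun i _ => normr_ge0 _) e2.
  move: (hh i isT) => /normr0P; rewrite subr_eq0 => /eqP <-.
  by rewrite trmxK.
have [y [hy hgy hmin]] := evt cg cf (ex_intro _ z0^T (feas1 _ hz0 hAz0)).
have [hzy hAy] := feas2 _ hy hgy.
exists y^T; split => // z' hz' hAz'.
have [hb hg] := feas1 _ hz' hAz'.
have := hmin _ hb hg; rewrite /ff !l1E.
have e (w : 'cV[R]_n) : \sum_j `|x j 0 - w^T ord0 j| = \sum_j `|(x - w) j 0|.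
  by apply: eq_bigr => j _; rewrite !mxE.
by rewrite -[y]trmxK !e trmxK.
Qed.

End Min.

Section Helpers.
Variable R : realType.

Lemma sumvD n (w1 w2 : 'cV[R]_n) : \sum_k (w1 + w2) k 0 = \sum_k w1 k 0 + \sum_k w2 k 0.
Proof. by rewrite -big_split; apply: eq_bigr => k _; rewrite mxE. Qed.
Lemma sumvN n (w : 'cV[R]_n) : \sum_k (- w) k 0 = - \sum_k w k 0.
Proof. by rewrite -sumrN; apply: eq_bigr => k _; rewrite mxE. Qed.
Lemma sumvZ n a (w : 'cV[R]_n) : \sum_k (a *: w) k 0 = a * \sum_k w k 0.
Proof. by rewrite mulr_sumr; apply: eq_bigr => k _; rewrite mxE. Qed.

Lemma entry_id n (x z W1 W2 rho e : 'cV[R]_n) (a b th : R) k : x - z = W1 - W2 ->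
  (x - (z - th *: W2 + a *: rho + b *: e)) k 0 =
  (W1 k 0 - b * e k 0) - (1 - th) * W2 k 0 - a * rho k 0.
Proof.
move=> h; have := congr1 (fun M : 'cV[R]_n => M k 0) h; rewrite !mxE => h'.
lra.
Qed.

Lemma entry_z n (z W2 rho e : 'cV[R]_n) (a b th : R) k :
  (z - th *: W2 + a *: rho + b *: e) k 0 = z k 0 - th * W2 k 0 + a * rho k 0 + b * e k 0.
Proof. by rewrite !mxE. Qed.

Lemma id2 p (u q c : 'cV[R]_p) th t e : 0 < 1 + e ->
  u - th *: (t *: q) + (th * t * (1 - e / (1 + e))) *: (q + e *: (q - c))
    + (th * t * (e / (1 + e))) *: c = u.
Proof. move=> h; apply/matrixP => i k; rewrite !mxE; field; by rewrite gt_eqF. Qed.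

Lemma inf_ge0 (E : set R) : (forall y, E y -> 0 <= y) -> 0 <= inf E.
Proof.
move=> h; case: (pselect (E !=set0)) => [hne|/nonemptyPn ->]; last by rewrite inf0.
by apply: lb_le_inf.
Qed.
End Helpers.

Section Main.
Variables (R : realType) (m n : nat) (N : 'cV[R]_m -> R).
Variables (A : 'M[R]_(m + 1, n)) (v : 'cV[R]_m).
Hypothesis HN : is_norm N.
Variable u : 'cV[R]_(m + 1).
Hypothesis Fu : Fv A v u.
Variables (x z : 'cV[R]_n).
Hypothesis hx : simplex n x.
Hypothesis hz : simplex n z.
Hypothesis hAz : A *m z = u.
Hypothesis hmin : forall z', simplex n z' -> A *m z' = u ->
  l1norm (x - z) <= l1norm (x - z').

Definition pos (a : R) := if 0 <= a then a else 0.
Definition neg (a : R) := if 0 <= a then 0 else - a.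
Lemma pos_ge0 a : 0 <= pos a. Proof. rewrite /pos; case: ifP => //; lra. Qed.
Lemma neg_ge0 a : 0 <= neg a. Proof. rewrite /neg; case: ifP => // /negbT; rewrite -ltNge; lra. Qed.
Lemma pos_neg a : pos a - neg a = a.
Proof. by rewrite /pos /neg; case: ifP => _; rewrite ?subr0 ?sub0r ?opprK. Qed.
Lemma pos_abs a : pos a + neg a = `|a|.
Proof.
rewrite /pos /neg; case: ifP => h; first by rewrite addr0 ger0_norm.
by rewrite add0r ltr0_norm // ltNge h.
Qed.

Definition wp : 'cV[R]_n := \col_j pos (x j 0 - z j 0).
Definition wm : 'cV[R]_n := \col_j neg (x j 0 - z j 0).
Definition t := \sum_j wp j 0.

Lemma wp_ge0 j : 0 <= wp j 0. Proof. by rewrite mxE pos_ge0. Qed.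
Lemma wm_ge0 j : 0 <= wm j 0. Proof. by rewrite mxE neg_ge0. Qed.
Lemma wp_le j : wp j 0 <= x j 0.
Proof.
have [hx0 _] := hx; have [hz0 _] := hz; have := hx0 j; have := hz0 j.
rewrite mxE /pos; case: ifP => _; lra.
Qed.
Lemma wm_le j : wm j 0 <= z j 0.
Proof.
have [hx0 _] := hx; have [hz0 _] := hz; have := hx0 j; have := hz0 j.
rewrite mxE /neg; case: ifP => _; lra.
Qed.
Lemma xz_eq : x - z = wp - wm.
Proof. by apply/matrixP => i k; rewrite ord1 !mxE pos_neg. Qed.
Lemma sum_wm : \sum_j wm j 0 = t.
Proof.
have [_ h1] := hx; have [_ h2] := hz.
have : \sum_j (wp j 0 - wm j 0) = \sum_j x j 0 - \sum_j z j 0.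
  rewrite -sumrB; apply: eq_bigr => j _; by rewrite !mxE pos_neg.
rewrite sumrB h1 h2 /t; lra.
Qed.
Lemma l1_xz : l1norm (x - z) = t + t.
Proof.
rewrite l1E -{2}sum_wm /t -big_split /=; apply: eq_bigr => j _.
by rewrite !mxE pos_abs.
Qed.
Lemma t_ge0 : 0 <= t. Proof. by apply: sumr_ge0 => j _; apply: wp_ge0. Qed.
Lemma t_le1 : t <= 1.
Proof. have [_ h1] := hx; rewrite -h1; apply: ler_sum => j _; exact: wp_le. Qed.

Lemma Isz : Isupp A v u z.
Proof. by apply: (Fv_supp Fu hz); rewrite hAz. Qed.

Section Tpos.
Hypothesis ht : 0 < t.

Definition q := A *m (t^-1 *: wm).
Definition p := A *m (t^-1 *: wp).

Lemma simplex_wm : simplex n (t^-1 *: wm).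
Proof.
split; first by move=> j; rewrite mxE mulr_ge0 ?invr_ge0 ?t_ge0 ?wm_ge0.
under eq_bigr do rewrite mxE.
by rewrite -mulr_sumr sum_wm mulVf // gt_eqF.
Qed.

Lemma simplex_wp : simplex n (t^-1 *: wp).
Proof.
split; first by move=> j; rewrite mxE mulr_ge0 ?invr_ge0 ?t_ge0 ?wp_ge0.
under eq_bigr do rewrite mxE.
by rewrite -mulr_sumr mulVf // gt_eqF.
Qed.

Lemma Fq : Fv A v q.
Proof.
apply: (Fv_of Fu simplex_wm) => j; rewrite mxE mulf_eq0 negb_or => /andP[_ hj].
apply: Isz; rewrite gt_eqF //.
have := wm_le j; have := wm_ge0 j; move: hj; rewrite neq_lt => /orP[]; lra.
Qed.

Definition G := fun y => Fv A v y /\ exists2 e : R, 0 < e & Fv A v (q + e *: (q - y)).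

Lemma G_conv : convex_set G.
Proof.
move=> x1 y1 l [F1 [e1 e10 Fr1]] [F2 [e2 e20 Fr2]] /andP[l0 l1].
split; first by apply: (Fv_comb2 Fu) => //; rewrite l0 l1.
pose e := Num.min e1 e2.
have e0 : 0 < e by rewrite lt_min e10 e20.
have ee1 : e <= e1 by rewrite ge_min lexx.
have ee2 : e <= e2 by rewrite ge_min lexx orbT.
exists e => //.
pose a := l * (1 - e / e1) + (1 - l) * (1 - e / e2).
pose b := l * (e / e1).
pose d := (1 - l) * (e / e2).
have r1 : e / e1 <= 1 by rewrite ler_pdivrMr // mul1r.
have r2 : e / e2 <= 1 by rewrite ler_pdivrMr // mul1r.
have r1' : 0 <= e / e1 by rewrite divr_ge0 // ltW.
have r2' : 0 <= e / e2 by rewrite divr_ge0 // ltW.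
have -> : q + e *: (q - (l *: x1 + (1 - l) *: y1)) =
   a *: q + b *: (q + e1 *: (q - x1)) + d *: (q + e2 *: (q - y1)).
  apply/matrixP => i k; rewrite !mxE /a /b /d.
  field; by rewrite ?gt_eqF.
apply: (Fv_comb3 Fu); [rewrite /a; nra|rewrite /b; nra|rewrite /d; nra| |exact: Fq|exact: Fr1|exact: Fr2].
rewrite /a /b /d; field; by rewrite !gt_eqF.
Qed.

Lemma G_ext1 a b l : Fv A v a -> Fv A v b -> 0 < l < 1 ->
  G (l *: a + (1 - l) *: b) -> G a.
Proof.
move=> Fa Fb /andP[l0 l1] [_ [e e0 Fr]].
split => //.
exists (l * e / (1 + e)); first by rewrite divr_gt0 ?mulr_gt0 // addr_gt0.
have -> : q + (l * e / (1 + e)) *: (q - a) =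
   (e * l / (1 + e)) *: q + (1 / (1 + e)) *: (q + e *: (q - (l *: a + (1 - l) *: b)))
   + (e * (1 - l) / (1 + e)) *: b.
  apply/matrixP => i k; rewrite !mxE.
  field; by rewrite gt_eqF // addr_gt0.
have e1 : 0 < 1 + e by rewrite addr_gt0.
apply: (Fv_comb3 Fu) => //.
- apply: divr_ge0; [apply: mulr_ge0|]; lra.
- apply: divr_ge0; lra.
- apply: divr_ge0; [apply: mulr_ge0|]; lra.
- field; by rewrite gt_eqF.
- exact: Fq.
Qed.

Lemma faceG : is_face (Fv A v) G.
Proof.
split; first by move=> y [].
  exact: G_conv.
move=> a b l Fa Fb hl hG; split; first exact: (G_ext1 Fa Fb hl hG).
apply: (G_ext1 Fb Fa (l := 1 - l)).
  by move: hl => /andP[? ?]; apply/andP; split; lra.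
have -> : 1 - (1 - l) = l by ring.
by rewrite addrC.
Qed.

Lemma key j : G (col j A) -> wp j 0 = 0.
Proof.
move=> [Fj [e e0 Fr]].
apply/eqP/negPn/negP => hj.
have wpj : 0 < wp j 0 by rewrite lt_neqAle eq_sym hj wp_ge0.
have [rho [hrho hArho _]] := Fv_rep Fu Fr.
have e1 : 0 < 1 + e by rewrite addr_gt0.
set lam := e / (1 + e).
have lam0 : 0 < lam by rewrite divr_gt0.
have lam1 : lam < 1 by rewrite ltr_pdivrMr // mul1r ltrDr ltr01.
set th := Num.min 1 (wp j 0 / (t * lam)).
have tl0 : 0 < t * lam by rewrite mulr_gt0.
have th0 : 0 < th by rewrite lt_min ltr01 divr_gt0.
have th1 : th <= 1 by rewrite ge_min lexx.
have th2 : th * (t * lam) <= wp j 0.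
  by rewrite -ler_pdivlMr // ge_min lexx orbT.
pose z' := z - th *: wm + (th * t * (1 - lam)) *: rho + (th * t * lam) *: ee R j.
have [hz0 hz1] := hz.
have [hr0 hr1] := hrho.
have th0' := ltW th0; have ht' := ltW ht; have lam0' := ltW lam0.
have lam1' : 0 <= 1 - lam by rewrite subr_ge0 ltW.
have hz' : simplex n z'.
  split.
  - move=> k; rewrite /z' entry_z ee_entry.
    have := wm_le k; have := wm_ge0 k; have := hr0 k.
    have a3 : 0 <= th * t * lam * (k == j)%:R.
      apply: mulr_ge0; last exact: ler0n.
    by apply: mulr_ge0 => //; apply: mulr_ge0.
    have a2 : forall r, 0 <= r -> 0 <= th * t * (1 - lam) * r.
      move=> r hr; apply: mulr_ge0 => //; apply: mulr_ge0 => //.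
      by apply: mulr_ge0.
    move=> hrk hw0 hwz; have := a2 _ hrk.
    nra.
  - rewrite /z' !sumvD sumvN !sumvZ hz1 hr1 sum_wm sum_ee; ring.
have hAz' : A *m z' = u.
  have Awm : A *m wm = t *: q.
    by rewrite /q -scalemxAr scalerA divff ?gt_eqF // scale1r.
  rewrite /z' !mulmxDr mulmxN -!scalemxAr hAz Aee hArho Awm /lam.
  exact: id2.
have := hmin hz' hAz'; rewrite l1_xz.
have hk : forall k, `|(x - z') k 0| <=
    (wp k 0 - th * t * lam * ee R j k 0) + (1 - th) * wm k 0 + th * t * (1 - lam) * rho k 0.
  move=> k; rewrite /z' (@entry_id R n x z wp wm rho (ee R j) (th * t * (1 - lam)) (th * t * lam) th k xz_eq).
  have hP : 0 <= wp k 0 - th * t * lam * ee R j k 0.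
    rewrite ee_entry; case: (eqVneq k j) => [->|_]; last by rewrite mulr0 subr0 wp_ge0.
    by rewrite mulr1 subr_ge0 -mulrA.
  have hQ : 0 <= (1 - th) * wm k 0 by rewrite mulr_ge0 ?subr_ge0 ?wm_ge0.
  have hT : 0 <= th * t * (1 - lam) * rho k 0.
    apply: mulr_ge0 => //; apply: mulr_ge0 => //; by apply: mulr_ge0.
  rewrite ler_norml; apply/andP; split; lra.
have : \sum_k `|(x - z') k 0| <= \sum_k ((wp k 0 - th * t * lam * ee R j k 0)
    + (1 - th) * wm k 0 + th * t * (1 - lam) * rho k 0).
  by apply: ler_sum => k _; exact: hk.
rewrite -l1E.
rewrite big_split /= big_split /= sumrB -!mulr_sumr sum_wm hr1 sum_ee -/t => hle hmn.
have : 0 < th * t * lam by apply: mulr_gt0 => //; apply: mulr_gt0.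
move: hle hmn; lra.
Qed.

Lemma qG : G q.
Proof.
split; first exact: Fq.
by exists 1 => //; rewrite subrr scaler0 addr0; exact: Fq.
Qed.

Lemma main_pos : t * Phi N A v <= normv N v (A *m x - u) /\ 0 < Phi N A v.
Proof.
have hne : G <> set0 by move=> h; have := qG; rewrite h.
have [j hj] : exists j, wp j 0 != 0.
  case: (boolP [exists j, wp j 0 != 0]) => [/existsP //|/existsPn hn].
  have : t = 0 by apply: big1 => k _; apply/eqP/negbNE/hn.
  by move=> h; move: ht; rewrite h ltxx.
have hnA : G <> convA A.
  move=> h; have : G (col j A) by rewrite h; apply: convA_ee.
  by move/key => h0; move: hj; rewrite h0 eqxx.
have fG : faceset A v G by split; [exact: faceG|split].
have Phi0 : 0 < Phi N A v by apply: (Phi_pos HN Fu); exists G.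
split => //.
have hp : conv_cols A (fun j => ~ G (col j A)) p.
  exists (t^-1 *: wp) => //; split; first exact: simplex_wp.
  move=> k hk; case: (pselect (G (col k A))) => [Gk|nGk]; last by exfalso; apply: hk.
  by rewrite mxE key // mulr0.
have hPhi := Phi_le N fG qG hp.
have e : A *m x - u = t *: (p - q).
  rewrite -hAz -mulmxBr xz_eq mulmxBr scalerBr /p /q -!scalemxAr !scalerA.
  by rewrite divff ?gt_eqF // !scale1r.
rewrite e.
apply: le_trans (normv_scale _ _ _ _); last by rewrite ltW // t_le1.
  2: exact: HN.
rewrite -opprB normvN //.
by rewrite ler_pM2l.
Qed.

End Tpos.
End Main.

Theorem lemma2 (R : realType) (m n : nat) (N : 'cV[R]_m -> R)
  (A : 'M[R]_(m + 1, n)) (v : 'cV[R]_m) :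
  is_norm N ->
  (exists i j : 'I_n, col i A != col j A) ->
  forall u x, Fv A v u -> simplex n x ->
  exists z, [/\ simplex n z, A *m z = u &
    l1norm (x - z) <= 2 * normv N v (A *m x - u) / Phi N A v].
Proof.
move=> HN _ u x Fu hx.
have [z [hz hAz hmin]] : exists z, [/\ simplex n z, A *m z = u &
    forall z', simplex n z' -> A *m z' = u -> l1norm (x - z) <= l1norm (x - z')].
  apply: exists_min; have [[z0 h0 e0] _] := Fu; by exists z0.
exists z; split => //.
rewrite (l1_xz hx hz).
have ht0 := t_ge0 x z.
have [ht|ht] := ltrP 0 (t x z).
  have [h1 h2] := main_pos HN Fu hx hz hAz hmin ht.
  rewrite ler_pdivlMr //; nra.
have -> : t x z = 0 by apply/eqP; rewrite eq_le ht ht0.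
rewrite addr0; apply: mulr_ge0; first by apply: mulr_ge0; [lra | exact: normv_ge0].
rewrite invr_ge0; apply: inf_ge0 => _ [G _ <-]; exact: distv_ge0.
Qed.
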